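(* Let $Z,X$ be real vector spaces, $\Omega\subseteq Z$ nonempty, $f:Z\to X$, and let $K\subseteq X$ be a nontrivial convex cone with a convex base $B$. If $x_0\in O^s$, then $x_0$ is a VH solution.
   Context: $X'$ is the algebraic dual of $X$. $K$ nontrivial means $K\ne\{0\}$, $K\ne X$. A base of $K$ is a set $B$ with $0\notin B$ such that each $k\in K\setminus\{0\}$ has a unique representation $k=tb$, $t>0$, $b\in B$. $K^{+s}:=\{l\in X':\ l(a)>0\ \forall a\in K\setminus\{0\}\}$. For $l\in X'$, $O_l$ is the set of minimizers of $x\mapsto l(f(x))$ over $\Omega$, and $O^s:=\{x_0\in\Omega:\ \exists l\in K^{+s} \text{ with } x_0\in O_l\}$. $cor(A):=\{x\in A:\ \forall x'\in X\ \exists \lambda'>0 \text{ with } x+\lambda x'\in A\ \forall\lambda\in[0,\lambda']\}$. $x_0\in\Omega$ is a VH solution if there is a pointed convex cone $C\subseteq X$ ($C\cap(-C)=\{0\}$) with $K\setminus\{0\}\subseteq cor(C)$ and $(f(\Omega)-f(x_0))\cap(-C)=\{0\}$. *)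

(* Defs.v *)
From mathcomp Require Import all_boot all_order all_algebra.
From mathcomp Require Import boolp classical_sets reals.
Set Implicit Arguments. Unset Strict Implicit. Unset Printing Implicit Defensive.
Import Order.TTheory GRing.Theory Num.Theory.
Local Open Scope ring_scope.
Local Open Scope classical_set_scope.

Section Defs.
Variable R : realType.

Definition lin_functional (X : lmodType R) (l : X -> R) : Prop :=
  forall (a : R) (x y : X), l (a *: x + y) = a * l x + l y.

Definition convex_set (X : lmodType R) (A : set X) : Prop :=
  forall x y (t : R), A x -> A y -> 0 <= t -> t <= 1 ->
    A (t *: x + (1 - t) *: y).

Definition is_cone (X : lmodType R) (K : set X) : Prop :=
  K 0 /\ forall (t : R) k, K k -> 0 <= t -> K (t *: k).

Definition convex_cone (X : lmodType R) (K : set X) : Prop :=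
  is_cone K /\ convex_set K.

Definition pointed (X : lmodType R) (C : set X) : Prop :=
  C `&` [set - x | x in C] = [set 0].

Definition nontrivial (X : lmodType R) (K : set X) : Prop :=
  K <> [set 0] /\ K <> setT.

Definition is_base (X : lmodType R) (K B : set X) : Prop :=
  ~ B 0 /\
  forall k, K k -> k <> 0 ->
    exists t b, [/\ 0 < t, B b & k = t *: b] /\
    forall t' b', 0 < t' -> B b' -> k = t' *: b' -> t' = t /\ b' = b.

Definition Kplus_s (X : lmodType R) (K : set X) : set (X -> R) :=
  [set l | lin_functional l /\ forall a, K a -> a <> 0 -> 0 < l a].

Definition O_l (Z X : lmodType R) (Omega : set Z) (f : Z -> X) (l : X -> R)
  : set Z :=
  [set x | Omega x /\ forall y, Omega y -> l (f x) <= l (f y)].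

Definition O_s (Z X : lmodType R) (Omega : set Z) (f : Z -> X) (K : set X)
  : set Z :=
  [set x0 | Omega x0 /\ exists l, Kplus_s K l /\ O_l Omega f l x0].

Definition cor (X : lmodType R) (A : set X) : set X :=
  [set x | A x /\ forall x' : X, exists2 lam' : R, 0 < lam' &
     forall lam : R, 0 <= lam -> lam <= lam' -> A (x + lam *: x')].

Definition VH_solution (Z X : lmodType R) (Omega : set Z) (f : Z -> X)
  (K : set X) (x0 : Z) : Prop :=
  Omega x0 /\
  exists C : set X, [/\ convex_cone C, pointed C,
     K `\ 0 `<=` cor C &
     [set f x - f x0 | x in Omega] `&` [set - c | c in C] = [set 0]].

End Defs.

(* Main.v *)
Require Import Defs.
From mathcomp Require Import all_boot all_order all_algebra.
From mathcomp Require Import boolp classical_sets reals.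
From mathcomp Require Import lra.
Import Order.TTheory GRing.Theory Num.Theory.
Set Implicit Arguments.
Local Open Scope ring_scope.
Local Open Scope classical_set_scope.

Section Aux.
Variables (R : realType) (X : lmodType R) (l : X -> R).
Hypothesis lin : lin_functional l.

Lemma l0 : l 0 = 0.
Proof.
have := lin 1 0 0. rewrite scaler0 addr0 mul1r => h.
have : l 0 + l 0 = l 0 + 0 by rewrite -h addr0.
by move/addrI.
Qed.

Lemma lZ t x : l (t *: x) = t * l x.
Proof. by have := lin t x 0; rewrite addr0 l0 addr0. Qed.

Lemma lD x y : l (x + y) = l x + l y.
Proof. by have := lin 1 x y; rewrite scale1r mul1r. Qed.

Lemma lN x : l (- x) = - l x.
Proof. by rewrite -scaleN1r lZ mulN1r. Qed.

Definition CC : set X := [set x | x = 0 \/ 0 < l x].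

Lemma CC_scale t x : CC x -> 0 <= t -> CC (t *: x).
Proof.
move=> [->|hx] ht; first by left; rewrite scaler0.
have [->|tn0] := eqVneq t 0; first by left; rewrite scale0r.
by right; rewrite lZ; apply: mulr_gt0 => //; rewrite lt_def tn0 ht.
Qed.

Lemma CC_add x y : CC x -> CC y -> CC (x + y).
Proof.
move=> [->|hx]; first by rewrite add0r.
move=> [->|hy]; first by rewrite addr0; right.
by right; rewrite lD addr_gt0.
Qed.

End Aux.

Theorem theorem4p16 (R : realType) (Z X : lmodType R) (Omega : set Z)
  (f : Z -> X) (K B : set X) (x0 : Z) :
  Omega !=set0 ->
  convex_cone K -> nontrivial K ->
  is_base K B -> convex_set B ->
  O_s Omega f K x0 ->
  VH_solution Omega f K x0.
Proof.
move=> _ _ _ _ _ [Ox0 [l [[lin lpos] [_ lmin]]]].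
split => //; exists (@CC _ _ l); split.
- split; first split.
  + by left.
  + by move=> t k hk ht; apply: CC_scale.
  + move=> x y t hx hy t0 t1; apply: CC_add => //; apply: CC_scale => //.
    by rewrite subr_ge0.
- rewrite /pointed eqEsubset; split => x.
  + move=> [hx [y hy hyx]]; case: hx => [//|hx]; exfalso.
    case: hy => [hy0|hy].
      by move: hx; rewrite -hyx hy0 oppr0 (l0 lin) ltxx.
    by move: hx; rewrite -hyx (lN lin); lra.
  + move=> -> /=; split; first by left.
    by exists 0; [left | rewrite oppr0].
- move=> k [hk hk0]; split; first by right; apply: lpos.
  have lk := lpos k hk hk0.
  move=> x'; exists (l k / (`|l x'| + 1)).
    by apply: divr_gt0 => //; apply: ltr_wpDl.
  move=> lam l0' llam; right; rewrite (lD lin) (lZ lin).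
  have hp : 0 < `|l x'| + 1 by apply: ltr_wpDl.
  have : lam * (`|l x'| + 1) <= l k.
    by rewrite -ler_pdivlMr.
  have : - `|l x'| <= l x' by rewrite lerNl ler_normr lexx orbT.
  move=> h1 h2.
  have : lam * - `|l x'| <= lam * l x' by rewrite ler_wpM2l.
  nra.
- rewrite eqEsubset; split => v.
  + move=> [[x Ox <-] [c hc hcv]].
    have := lmin x Ox.
    case: hc hcv => [-> | hc]; first by rewrite oppr0.
    move=> hcv hle; exfalso.
    have e : f x0 - f x = c by rewrite -[c]opprK hcv opprB.
    have : l (f x0 - f x) = l (f x0) - l (f x) by rewrite (lD lin) (lN lin).
    rewrite e; lra.
  + move=> -> /=; split; first by exists x0 => //; rewrite subrr.
    by exists 0; [left | rewrite oppr0].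
Qed.
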